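(* Let $A$ and $A'$ be three-dimensional cubic regular $\mathbb Z$-algebras over $k$. If their truncations $\bigoplus_{0\le i,j\le3}A_{ij}$ and $\bigoplus_{0\le i,j\le 3}A'_{ij}$ are isomorphic (as algebras, compatibly with the decompositions), then $A\cong A'$.
   Context: A $\mathbb Z$-algebra over a field $k$ is $A=\bigoplus_{i,j\in\mathbb Z}A_{ij}$ with associative multiplication, $A_{ij}A_{jk}\subseteq A_{ik}$, $A_{ij}A_{kl}=0$ for $j\ne k$, local units $e_i\in A_{ii}$. Right modules form $\mathrm{Gr}(A)$, $P_i=e_iA$. $A$ is connected if $A_{ij}=0$ for $j<i$, $\dim_kA_{ij}<\infty$, $A_{ii}=k$; $S_i$ is the simple quotient of $P_i$. A connected $A$ is AS-regular if $\dim A_{ij}$ is polynomially bounded in $j-i$, the projective dimensions of the $S_i$ are finite and uniformly bounded, and for each $i$, $\sum_{j,l}\dim\operatorname{Ext}^j_{\mathrm{Gr}(A)}(S_l,P_i)=1$; it is three-dimensional cubic regular if in addition each $S_i$ has minimal resolution $0\to P_{i+4}\to P_{i+3}^2\to P_{i+1}^2\to P_i\to S_i\to0$. *)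

(* Defs.v *)
From HB Require Import structures.
From mathcomp Require Import all_boot all_order all_algebra.
Set Implicit Arguments. Unset Strict Implicit. Unset Printing Implicit Defensive.
Import GRing.Theory.
Local Open Scope ring_scope.

(* A Z-algebra over k whose components A_ij are finite-dimensional k-spaces
   (finite-dimensionality is part of connectedness, the only case used).
   A = (+)_{i,j} A_ij; the rule A_ij A_kl = 0 for j <> k is built into the
   typing of the multiplication. *)
Record zalg (k : fieldType) := ZAlg {
  zcomp :> int -> int -> vectType k;
  zmul : forall i j l, zcomp i j -> zcomp j l -> zcomp i l;
  zunit : forall i, zcomp i i;
  zmulDl : forall i j l (a : k) (x y : zcomp i j) (z : zcomp j l),
      zmul (a *: x + y) z = a *: zmul x z + zmul y z;
  zmulDr : forall i j l (a : k) (x : zcomp i j) (y z : zcomp j l),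
      zmul x (a *: y + z) = a *: zmul x y + zmul x z;
  zmulA : forall i j l m (x : zcomp i j) (y : zcomp j l) (z : zcomp l m),
      zmul (zmul x y) z = zmul x (zmul y z);
  zmul1l : forall i j (x : zcomp i j), zmul (zunit i) x = x;
  zmul1r : forall i j (x : zcomp i j), zmul x (zunit j) = x
}.
Arguments zmul {k} z0 {i j l} _ _.
Arguments zunit {k} z0 i.

Definition zdim (k : fieldType) (A : zalg k) (i j : int) : nat := \dim {: A i j}.

Definition zconnected (k : fieldType) (A : zalg k) : Prop :=
  (forall i j : int, j < i -> zdim A i j = 0%N) /\ (forall i, zdim A i i = 1%N).

Definition zpolybounded (k : fieldType) (A : zalg k) : Prop :=
  exists c d : nat, forall i j : int, (zdim A i j <= c * (absz (j - i)).+1 ^ d)%N.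

(* Data of a complex  P_{i+4} -> P_{i+3}^2 -> P_{i+1}^2 -> P_i  of free
   graded right modules P_m = e_m A; a morphism P_m -> P_n is left
   multiplication by an element of A_{nm}. *)
Record res_data (k : fieldType) (A : zalg k) (i : int) := ResData {
  rx1 : A i (i + 1); rx2 : A i (i + 1);
  ry11 : A (i + 1) (i + 3); ry12 : A (i + 1) (i + 3);
  ry21 : A (i + 1) (i + 3); ry22 : A (i + 1) (i + 3);
  rz1 : A (i + 3) (i + 4); rz2 : A (i + 3) (i + 4)
}.

(* 0 -> P_{i+4} -> P_{i+3}^2 -> P_{i+1}^2 -> P_i -> S_i -> 0 is exact, checked
   in every degree j (the degree-j part of P_m is A_{mj}, and (S_i)_j is k for
   j = i and 0 otherwise). Such a resolution is automatically minimal. *)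
Definition is_cubic_resolution (k : fieldType) (A : zalg k) (i : int)
    (r : res_data A i) : Prop :=
  [/\ (forall j (w : A (i + 4) j),
         zmul A (rz1 r) w = 0 -> zmul A (rz2 r) w = 0 -> w = 0),
      (forall j (u1 u2 : A (i + 3) j),
         (zmul A (ry11 r) u1 + zmul A (ry12 r) u2 = 0 /\
          zmul A (ry21 r) u1 + zmul A (ry22 r) u2 = 0) <->
         exists w : A (i + 4) j, u1 = zmul A (rz1 r) w /\ u2 = zmul A (rz2 r) w),
      (forall j (v1 v2 : A (i + 1) j),
         zmul A (rx1 r) v1 + zmul A (rx2 r) v2 = 0 <->
         exists u1 u2 : A (i + 3) j,
           v1 = zmul A (ry11 r) u1 + zmul A (ry12 r) u2 /\
           v2 = zmul A (ry21 r) u1 + zmul A (ry22 r) u2)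
    & (forall j (t : A i j), j != i ->
         exists v1 v2 : A (i + 1) j, t = zmul A (rx1 r) v1 + zmul A (rx2 r) v2)].

(* Hom_{Gr A}(-, P_i) applied to the resolution r of S_l: using
   Hom(P_m, P_i) = A_{im}, the complex
   A_{il} -> A_{i,l+1}^2 -> A_{i,l+3}^2 -> A_{i,l+4}. *)
Definition ext_d0 (k : fieldType) (A : zalg k) (i l : int) (r : res_data A l) :=
  linfun (fun x : A i l => (zmul A x (rx1 r), zmul A x (rx2 r))).
Definition ext_d1 (k : fieldType) (A : zalg k) (i l : int) (r : res_data A l) :=
  linfun (fun v : prod (A i (l + 1)) (A i (l + 1)) =>
    (zmul A v.1 (ry11 r) + zmul A v.2 (ry21 r),
     zmul A v.1 (ry12 r) + zmul A v.2 (ry22 r))).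
Definition ext_d2 (k : fieldType) (A : zalg k) (i l : int) (r : res_data A l) :=
  linfun (fun u : prod (A i (l + 3)) (A i (l + 3)) =>
    zmul A u.1 (rz1 r) + zmul A u.2 (rz2 r)).

(* sum_j dim Ext^j_{Gr A}(S_l, P_i), computed from the resolution r of S_l *)
Definition ext_total (k : fieldType) (A : zalg k) (i l : int) (r : res_data A l) : nat :=
  (\dim (lker (ext_d0 i r))
   + (\dim (lker (ext_d1 i r)) - \dim (limg (ext_d0 i r)))
   + (\dim (lker (ext_d2 i r)) - \dim (limg (ext_d1 i r)))
   + (zdim A i (l + 4) - \dim (limg (ext_d2 i r))))%N.

(* Three-dimensional cubic regular: connected, polynomial growth, each S_i has
   a (minimal) resolution of the cubic shape (so pd S_i <= 3, uniformly), and
   the Gorenstein condition sum_{j,l} dim Ext^j(S_l, P_i) = 1 for every i. *)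
Definition cubic_regular (k : fieldType) (A : zalg k) : Prop :=
  [/\ zconnected A, zpolybounded A &
      exists res : forall l : int, res_data A l,
        (forall l, is_cubic_resolution (res l)) /\
        (forall i : int, exists l0 : int,
            ext_total i (res l0) = 1%N /\
            forall l, l != l0 -> ext_total i (res l) = 0%N)].

Definition graded_iso_on (k : fieldType) (A B : zalg k) (inR : int -> bool) : Prop :=
  exists phi : forall i j : int, A i j -> B i j,
    [/\ (forall i j, inR i -> inR j ->
           forall (a : k) (x y : A i j), phi i j (a *: x + y) = a *: phi i j x + phi i j y),
        (forall i j, inR i -> inR j -> bijective (phi i j)),
        (forall i j l, inR i -> inR j -> inR l ->
           forall (x : A i j) (y : A j l), phi i l (zmul A x y) = zmul B (phi i j x) (phi j l y))
      & (forall i, inR i -> phi i i (zunit A i) = zunit B i)].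

Definition zalg_iso (k : fieldType) (A B : zalg k) : Prop :=
  graded_iso_on A B (fun _ => true).

Definition trunc03_iso (k : fieldType) (A B : zalg k) : Prop :=
  graded_iso_on A B (fun i : int => (0 <= i) && (i <= 3)).

(* Main.v *)
Require Import Defs.
From HB Require Import structures.
From mathcomp Require Import all_boot all_order all_algebra.
From Stdlib Require Import ClassicalEpsilon FunctionalExtensionality.
Set Implicit Arguments. Unset Strict Implicit. Unset Printing Implicit Defensive.
Import GRing.Theory.
Local Open Scope ring_scope.

Section ZmulLin.
Variables (k : fieldType) (A : zalg k).

Lemma zmul0l i j l (z : A j l) : zmul A (0 : A i j) z = 0.
Proof.
have := zmulDl 1 (0 : A i j) 0 z; rewrite !scale1r addr0 => H.
by apply: (@addrI _ (zmul A (0 : A i j) z)); rewrite addr0 -H.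
Qed.

Lemma zmul0r i j l (x : A i j) : zmul A x (0 : A j l) = 0.
Proof.
have := zmulDr 1 x 0 (0 : A j l); rewrite !scale1r addr0 => H.
by apply: (@addrI _ (zmul A x (0 : A j l))); rewrite addr0 -H.
Qed.

Lemma zmulDl2 i j l (x y : A i j) (z : A j l) : zmul A (x + y) z = zmul A x z + zmul A y z.
Proof. by have := zmulDl 1 x y z; rewrite !scale1r. Qed.
Lemma zmulDr2 i j l (x : A i j) (y z : A j l) : zmul A x (y + z) = zmul A x y + zmul A x z.
Proof. by have := zmulDr 1 x y z; rewrite !scale1r. Qed.
Lemma zmulZl i j l a (x : A i j) (z : A j l) : zmul A (a *: x) z = a *: zmul A x z.
Proof. by rewrite -(addr0 (a *: x)) zmulDl zmul0l addr0. Qed.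
Lemma zmulZr i j l a (x : A i j) (z : A j l) : zmul A x (a *: z) = a *: zmul A x z.
Proof. by rewrite -(addr0 (a *: z)) zmulDr zmul0r addr0. Qed.
Lemma zmulNl i j l (x : A i j) (z : A j l) : zmul A (- x) z = - zmul A x z.
Proof. by rewrite -scaleN1r zmulZl scaleN1r. Qed.
Lemma zmulNr i j l (x : A i j) (z : A j l) : zmul A x (- z) = - zmul A x z.
Proof. by rewrite -scaleN1r zmulZr scaleN1r. Qed.
Lemma zmulBl i j l (x y : A i j) (z : A j l) : zmul A (x - y) z = zmul A x z - zmul A y z.
Proof. by rewrite zmulDl2 zmulNl. Qed.
Lemma zmulBr i j l (x : A i j) (y z : A j l) : zmul A x (y - z) = zmul A x y - zmul A x z.
Proof. by rewrite zmulDr2 zmulNr. Qed.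

Lemma zmul_suml i j l (I : Type) (r : seq I) (P : pred I) (F : I -> A i j) (z : A j l) :
  zmul A (\sum_(a <- r | P a) F a) z = \sum_(a <- r | P a) zmul A (F a) z.
Proof.
apply: (big_morph (fun x => zmul A x z)); [move=> x y; exact: zmulDl2 | exact: zmul0l].
Qed.
Lemma zmul_sumr i j l (I : Type) (r : seq I) (P : pred I) (F : I -> A j l) (x : A i j) :
  zmul A x (\sum_(a <- r | P a) F a) = \sum_(a <- r | P a) zmul A x (F a).
Proof.
apply: (big_morph (fun z => zmul A x z)); [move=> y y'; exact: zmulDr2 | exact: zmul0r].
Qed.

End ZmulLin.

Lemma linfunE_gen (k : fieldType) (U V : vectType k) (f : U -> V)
  (Hf : forall (a : k) x y, f (a *: x + y) = a *: f x + f y) :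
  forall u, linfun f u = f u.
Proof.
pose F : {linear U -> V} := HB.pack f (GRing.isLinear.Build k U V _ f Hf).
move=> u; exact: (lfunE F u).
Qed.

Lemma sum2 (V : nmodType) (F : 'I_2 -> V) : \sum_(a < 2) F a = F ord0 + F ord_max.
Proof.
rewrite big_ord_recl big_ord1; congr (_ + _); congr F; exact: val_inj.
Qed.
Section Mat2.
Variables (k : fieldType) (V : lmodType k).
Implicit Types (C D K : 'M[k]_2) (v : 'I_2 -> V) (Y : 'I_2 -> 'I_2 -> V).

Definition mv C v : 'I_2 -> V := fun a => \sum_b C a b *: v b.
Definition lY C Y : 'I_2 -> 'I_2 -> V := fun a b => \sum_c C a c *: Y c b.
Definition rY Y K : 'I_2 -> 'I_2 -> V := fun a b => \sum_c K c b *: Y a c.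
Definition rowc (c : 'I_2 -> k) Y : 'I_2 -> V := fun b => \sum_a c a *: Y a b.
Definition lc (c : 'I_2 -> k) v : V := \sum_a c a *: v a.

Lemma ord2P (a : 'I_2) : a = ord0 \/ a = ord_max.
Proof. case: a => [[|[|n]] H]; [left|right|]; try exact: val_inj; by []. Qed.

Lemma sum_delta (F : 'I_2 -> V) a : \sum_b (a == b)%:R *: F b = F a.
Proof.
rewrite (bigD1 a) //= eqxx scale1r big1 ?addr0 // => b /negPf.
by rewrite eq_sym => ->; rewrite scale0r.
Qed.

Lemma mvM C D v : mv C (mv D v) = mv (C *m D) v.
Proof.
apply: functional_extensionality => a; rewrite /mv.
under eq_bigr do rewrite scaler_sumr.
rewrite exchange_big; apply: eq_bigr => c _; rewrite mxE scaler_suml.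
by apply: eq_bigr => b _; rewrite scalerA.
Qed.

Lemma mv1 v : mv 1%:M v = v.
Proof.
apply: functional_extensionality => a; rewrite /mv.
under eq_bigr do rewrite mxE.
exact: sum_delta.
Qed.

Lemma lYM C D Y : lY C (lY D Y) = lY (C *m D) Y.
Proof.
apply: functional_extensionality => a; apply: functional_extensionality => b; rewrite /lY.
under eq_bigr do rewrite scaler_sumr.
rewrite exchange_big; apply: eq_bigr => c _; rewrite mxE scaler_suml.
by apply: eq_bigr => d _; rewrite scalerA.
Qed.

Lemma rYM Y K D : rY (rY Y K) D = rY Y (K *m D).
Proof.
apply: functional_extensionality => a; apply: functional_extensionality => b; rewrite /rY.
under eq_bigr do rewrite scaler_sumr.
rewrite exchange_big; apply: eq_bigr => c _; rewrite mxE scaler_suml.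
by apply: eq_bigr => d _; rewrite scalerA mulrC.
Qed.

Lemma lYrY C Y K : lY C (rY Y K) = rY (lY C Y) K.
Proof.
apply: functional_extensionality => a; apply: functional_extensionality => b; rewrite /rY /lY.
under eq_bigr do rewrite scaler_sumr.
rewrite exchange_big; apply: eq_bigr => c _; rewrite scaler_sumr.
by apply: eq_bigr => d _; rewrite !scalerA mulrC.
Qed.

Lemma lY1 Y : lY 1%:M Y = Y.
Proof.
apply: functional_extensionality => a; apply: functional_extensionality => b; rewrite /lY.
under eq_bigr do rewrite mxE.
exact: (sum_delta (fun c => Y c b)).
Qed.

Lemma rY1 Y : rY Y 1%:M = Y.
Proof.
apply: functional_extensionality => a; apply: functional_extensionality => b; rewrite /rY.
under eq_bigr do rewrite mxE eq_sym.
exact: (sum_delta (fun c => Y a c)).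
Qed.

End Mat2.

Section ZMat.
Variables (k : fieldType) (A : zalg k).

Definition dot i j l (x : 'I_2 -> A i j) (v : 'I_2 -> A j l) : A i l :=
  \sum_a zmul A (x a) (v a).
Definition Ym i j l (Y : 'I_2 -> 'I_2 -> A i j) (u : 'I_2 -> A j l) : 'I_2 -> A i l :=
  fun a => \sum_b zmul A (Y a b) (u b).
Definition xr i j (x : 'I_2 -> A i j) (C : 'M[k]_2) : 'I_2 -> A i j :=
  fun b => \sum_a C a b *: x a.

Lemma Ym_lY i j l C (Y : 'I_2 -> 'I_2 -> A i j) (u : 'I_2 -> A j l) :
  Ym (lY C Y) u = mv C (Ym Y u).
Proof.
apply: functional_extensionality => a; rewrite /Ym /lY /mv.
under eq_bigr do rewrite zmul_suml.
rewrite exchange_big; apply: eq_bigr => c _; rewrite scaler_sumr.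
by apply: eq_bigr => b _; rewrite zmulZl.
Qed.

Lemma Ym_rY i j l K (Y : 'I_2 -> 'I_2 -> A i j) (u : 'I_2 -> A j l) :
  Ym (rY Y K) u = Ym Y (mv K u).
Proof.
apply: functional_extensionality => a; rewrite /Ym /rY /mv.
under eq_bigr do rewrite zmul_suml.
rewrite exchange_big; apply: eq_bigr => c _; rewrite zmul_sumr.
by apply: eq_bigr => b _; rewrite zmulZl zmulZr.
Qed.

Lemma dot_xr i j l (x : 'I_2 -> A i j) C (v : 'I_2 -> A j l) :
  dot (xr x C) v = dot x (mv C v).
Proof.
rewrite /dot /xr /mv.
under eq_bigr do rewrite zmul_suml.
rewrite exchange_big; apply: eq_bigr => a _; rewrite zmul_sumr.
by apply: eq_bigr => b _; rewrite zmulZl zmulZr.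
Qed.

End ZMat.
Section Good.
Variables (k : fieldType) (B : zalg k).

Definition goodYZ i1 i3 i4 (Y : 'I_2 -> 'I_2 -> B i1 i3) (z : 'I_2 -> B i3 i4) : Prop :=
 [/\ (forall u : 'I_2 -> B i1 i3, dot u z = 0 <-> exists c : 'I_2 -> k, u = rowc c Y),
     (forall c : 'I_2 -> k, rowc c Y = (fun _ => 0) -> forall a, c a = 0),
     (forall c : 'I_2 -> k, lc c z = 0 -> forall a, c a = 0)
   & (forall t : B i3 i4, exists c, t = lc c z)].

Definition goodX (W : int -> bool) i i1 i3 (x : 'I_2 -> B i i1) (Y : 'I_2 -> 'I_2 -> B i1 i3) : Prop :=
 (forall j, W j -> forall t : B i j, exists v : 'I_2 -> B i1 j, t = dot x v) /\
 (forall j, W j -> forall v : 'I_2 -> B i1 j, dot x v = 0 <-> exists u : 'I_2 -> B i3 j, v = Ym Y u).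

Lemma fin_choice2 (P : 'I_2 -> ('I_2 -> k) -> Prop) :
  (forall a, exists c, P a c) -> exists C : 'M[k]_2, forall a, P a (fun b => C a b).
Proof.
move=> H; have [c0 H0] := H ord0; have [c1 H1] := H ord_max.
pose C : 'M[k]_2 := \matrix_(a < 2, b < 2) if a == ord0 then c0 b else c1 b.
exists C => a.
case: (ord2P a) => ->.
  have -> : (fun b => C ord0 b) = c0.
    by apply: functional_extensionality => b; rewrite mxE eqxx.
  done.
have -> : (fun b => C ord_max b) = c1.
  by apply: functional_extensionality => b; rewrite mxE.
done.
Qed.

Lemma mv_inj (V : lmodType k) (z : 'I_2 -> V) :
  (forall c : 'I_2 -> k, lc c z = 0 -> forall a, c a = 0) ->
  forall C D : 'M[k]_2, mv C z = mv D z -> C = D.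
Proof.
move=> Hz C D E; apply/matrixP => a b.
have : lc (fun b => C a b - D a b) z = 0.
  rewrite /lc; under eq_bigr do rewrite scalerBl.
  by rewrite sumrB -/(mv C z a) -/(mv D z a) E subrr.
by move/Hz => /(_ b) /eqP; rewrite subr_eq0 => /eqP.
Qed.

Lemma lY_inj (V : lmodType k) (Y : 'I_2 -> 'I_2 -> V) :
  (forall c : 'I_2 -> k, rowc c Y = (fun _ => 0) -> forall a, c a = 0) ->
  forall C D : 'M[k]_2, lY C Y = lY D Y -> C = D.
Proof.
move=> HY C D E; apply/matrixP => a b.
have : rowc (fun b => C a b - D a b) Y = (fun _ => 0).
  apply: functional_extensionality => e.
  rewrite /rowc; under eq_bigr do rewrite scalerBl.
  by rewrite sumrB -/(lY C Y a e) -/(lY D Y a e) E subrr.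
by move/HY => /(_ b) /eqP; rewrite subr_eq0 => /eqP.
Qed.

Lemma rowc_delta (V : lmodType k) (Y : 'I_2 -> 'I_2 -> V) a :
  rowc (fun e => (a == e)%:R) Y = Y a.
Proof. apply: functional_extensionality => b; exact: (sum_delta (fun e => Y e b)). Qed.

Lemma good_half i1 i3 i4 Y z Y' z' :
  @goodYZ i1 i3 i4 Y z -> @goodYZ i1 i3 i4 Y' z' ->
  exists C K : 'M[k]_2, Y' = rY (lY C Y) K /\ z = mv K z'.
Proof.
move=> [L3 L4 L5 L6] [L3' L4' L5' L6'].
have [H EH] : exists H : 'M[k]_2, forall a, z' a = lc (fun b => H a b) z.
  by apply: (@fin_choice2 (fun a c => z' a = lc c z)) => a; exact: L6.
have [K EK] : exists K : 'M[k]_2, forall a, z a = lc (fun b => K a b) z'.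
  by apply: (@fin_choice2 (fun a c => z a = lc c z')) => a; exact: L6'.
have Ez' : z' = mv H z by apply: functional_extensionality => a; rewrite EH.
have Ez : z = mv K z' by apply: functional_extensionality => a; rewrite EK.
have HK : H *m K = 1%:M.
  apply: (mv_inj L5'); rewrite mv1 -mvM -Ez -Ez'; done.
have [C EC] : exists C : 'M[k]_2, forall a, rY Y' H a = rowc (fun b => C a b) Y.
  apply: (@fin_choice2 (fun a c => rY Y' H a = rowc c Y)) => a; apply/L3.
  have -> : rY Y' H a = xr (Y' a) H by [].
  rewrite dot_xr -Ez'; apply/L3'; exists (fun e => (a == e)%:R).
  by rewrite rowc_delta.
exists C, K; split=> //.
rewrite -[Y' in LHS]rY1 -HK -rYM; congr rY.
by apply: functional_extensionality => a; rewrite EC.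
Qed.

Lemma good_uniq i1 i3 i4 Y z Y' z' :
  @goodYZ i1 i3 i4 Y z -> @goodYZ i1 i3 i4 Y' z' ->
  exists C C' K K' : 'M[k]_2, [/\ Y' = rY (lY C Y) K, Y = rY (lY C' Y') K',
     C' *m C = 1%:M & C *m C' = 1%:M].
Proof.
move=> G G'.
have [C [K [E1 E2]]] := good_half G G'.
have [C' [K' [E3 E4]]] := good_half G' G.
have [_ L4 L5 _] := G; have [_ L4' L5' _] := G'.
have KK : K *m K' = 1%:M by apply: (mv_inj L5); rewrite -mvM -E4 -E2 mv1.
have KK' : K' *m K = 1%:M by apply: (mv_inj L5'); rewrite -mvM -E2 -E4 mv1.
exists C, C', K, K'; split=> //.
  apply: (lY_inj L4); rewrite lY1 -lYM.
  by apply: esym; rewrite {1}E3 E1 lYrY rYM KK rY1.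
apply: (lY_inj L4'); rewrite lY1 -lYM.
by apply: esym; rewrite {1}E1 E3 lYrY rYM KK' rY1.
Qed.

Lemma goodX_change W i i1 i3 (x : 'I_2 -> B i i1) Y Y' (C C' K K' : 'M[k]_2) :
  @goodX W i i1 i3 x Y -> Y' = rY (lY C Y) K -> Y = rY (lY C' Y') K' ->
  C' *m C = 1%:M -> C *m C' = 1%:M -> @goodX W i i1 i3 (xr x C') Y'.
Proof.
move=> [L1 L2] E1 E2 CC CC'.
have ECY : lY C Y = rY Y' K' by rewrite E2 lYrY lYM CC' lY1.
split.
  move=> j Wj t; have [v ->] := L1 j Wj t.
  by exists (mv C v); rewrite dot_xr mvM CC mv1.
move=> j Wj v; rewrite dot_xr (L2 j Wj); split.
  move=> [u Eu]; exists (mv K' u).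
  by rewrite -Ym_rY -ECY Ym_lY -Eu mvM CC' mv1.
move=> [u ->]; exists (mv K u).
by rewrite E1 Ym_rY Ym_lY mvM CC mv1.
Qed.

End Good.
Definition dupd (T : int -> Type) (f : forall j, T j) (i : int) (y : T i) : forall j, T j :=
  fun j => match i =P j with ReflectT e => eq_rect i T y j e | ReflectF _ => f j end.

Lemma dupd_eq (T : int -> Type) f i y : @dupd T f i y i = y.
Proof.
rewrite /dupd; case: (i =P i) => [e|n]; last by case: n.
by rewrite (eq_irrelevance e erefl).
Qed.

Lemma dupd_neq (T : int -> Type) f i y j : i != j -> @dupd T f i y j = f j.
Proof. by rewrite /dupd; case: (i =P j) => // ->; rewrite eqxx. Qed.

Lemma inj_surj_bij (T1 T2 : Type) (f : T1 -> T2) (inh : T1) :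
  injective f -> (forall y, exists x, f x = y) -> bijective f.
Proof.
move=> fI fS; pose g y := epsilon (inhabits inh) (fun x => f x = y).
have gK : cancel g f by move=> y; exact: (epsilon_spec (inhabits inh) _ (fS y)).
by exists g => // x; apply: fI; rewrite gK.
Qed.

Section DotLin.
Variables (k : fieldType) (A : zalg k).
Lemma dotB i j l (x : 'I_2 -> A i j) (v w : 'I_2 -> A j l) :
  dot x (fun a => v a - w a) = dot x v - dot x w.
Proof. by rewrite /dot -sumrB; apply: eq_bigr => a _; rewrite zmulBr. Qed.
Lemma dotDZ i j l (x : 'I_2 -> A i j) c (v w : 'I_2 -> A j l) :
  dot x (fun a => c *: v a + w a) = c *: dot x v + dot x w.
Proof.
rewrite /dot scaler_sumr -big_split; apply: eq_bigr => a _.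
by rewrite zmulDr.
Qed.
Lemma dot_zmul i j l m (x : 'I_2 -> A i j) (v : 'I_2 -> A j l) (s : A l m) :
  zmul A (dot x v) s = dot x (fun a => zmul A (v a) s).
Proof. by rewrite /dot zmul_suml; apply: eq_bigr => a _; rewrite zmulA. Qed.
End DotLin.
Section Iso.
Variables (k : fieldType) (A B : zalg k) (W : int -> bool)
  (phi : forall i j, A i j -> B i j).
Hypothesis Hlin : forall i j, W i -> W j ->
  forall (a : k) (x y : A i j), @phi i j (a *: x + y) = a *: @phi i j x + @phi i j y.
Hypothesis Hbij : forall i j, W i -> W j -> bijective (@phi i j).
Hypothesis Hmul : forall i j l, W i -> W j -> W l ->
  forall (x : A i j) (y : A j l), @phi i l (zmul A x y) = zmul B (@phi i j x) (@phi j l y).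

Section Fix.
Variables (i j : int) (Wi : W i) (Wj : W j).

Lemma phi0 : @phi i j 0 = 0.
Proof.
have := Hlin Wi Wj 1 0 0; rewrite !scale1r addr0 => H.
by apply: (@addrI _ (@phi i j 0)); rewrite addr0 -H.
Qed.
Lemma phiD x y : @phi i j (x + y) = @phi i j x + @phi i j y.
Proof. by have := Hlin Wi Wj 1 x y; rewrite !scale1r. Qed.
Lemma phiZ a x : @phi i j (a *: x) = a *: @phi i j x.
Proof. by rewrite -(addr0 (a *: x)) Hlin // phi0 addr0. Qed.
Lemma phiB x y : @phi i j (x - y) = @phi i j x - @phi i j y.
Proof. by have := Hlin Wi Wj (-1) y x; rewrite !scaleN1r => H; rewrite addrC H addrC. Qed.
Lemma phi_inj : injective (@phi i j).
Proof. by apply: bij_inj; exact: Hbij. Qed.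
Lemma phi_eq0 x : (@phi i j x = 0) <-> x = 0.
Proof. by split=> [H|->]; [apply: phi_inj; rewrite H phi0 | exact: phi0]. Qed.
Lemma phi_sum (F : 'I_2 -> A i j) : @phi i j (\sum_a F a) = \sum_a @phi i j (F a).
Proof. by rewrite !sum2 phiD. Qed.
Lemma phi_lc (c : 'I_2 -> k) (v : 'I_2 -> A i j) :
  @phi i j (lc c v) = lc c (fun a => @phi i j (v a)).
Proof. by rewrite /lc phi_sum; apply: eq_bigr => a _; rewrite phiZ. Qed.
Lemma phi_rowc (c : 'I_2 -> k) (Y : 'I_2 -> 'I_2 -> A i j) :
  (fun b => @phi i j (rowc c Y b)) = rowc c (fun a b => @phi i j (Y a b)).
Proof.
apply: functional_extensionality => b; rewrite /rowc phi_sum.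
by apply: eq_bigr => a _; rewrite phiZ.
Qed.
Lemma phi_surj2 (u : 'I_2 -> B i j) : exists u0 : 'I_2 -> A i j, u = (fun a => @phi i j (u0 a)).
Proof.
have [g _ gK] := Hbij Wi Wj.
by exists (fun a => g (u a)); apply: functional_extensionality => a; rewrite gK.
Qed.
Lemma phi_surj (u : B i j) : exists u0 : A i j, u = @phi i j u0.
Proof. have [g _ gK] := Hbij Wi Wj; by exists (g u); rewrite gK. Qed.
End Fix.

Lemma phi_dot i j l (Wi : W i) (Wj : W j) (Wl : W l) (x : 'I_2 -> A i j) (v : 'I_2 -> A j l) :
  @phi i l (dot x v) = dot (fun a => @phi i j (x a)) (fun a => @phi j l (v a)).
Proof. by rewrite /dot phi_sum //; apply: eq_bigr => a _; rewrite (Hmul Wi Wj Wl). Qed.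

Lemma phi_Ym i j l (Wi : W i) (Wj : W j) (Wl : W l) (Y : 'I_2 -> 'I_2 -> A i j) (u : 'I_2 -> A j l) :
  (fun a => @phi i l (Ym Y u a)) = Ym (fun a b => @phi i j (Y a b)) (fun a => @phi j l (u a)).
Proof.
apply: functional_extensionality => a.
by rewrite /Ym phi_sum //; apply: eq_bigr => b _; rewrite (Hmul Wi Wj Wl).
Qed.

Lemma map2_inj i j (Wi : W i) (Wj : W j) (u v : 'I_2 -> A i j) :
  (fun a => @phi i j (u a)) = (fun a => @phi i j (v a)) -> u = v.
Proof.
move=> E; apply: functional_extensionality => a.
by apply: (phi_inj Wi Wj); exact: (equal_f E a).
Qed.

Lemma goodYZ_transport i1 i3 i4 (W1 : W i1) (W3 : W i3) (W4 : W i4) Y z :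
  @goodYZ k A i1 i3 i4 Y z ->
  @goodYZ k B i1 i3 i4 (fun a b => @phi i1 i3 (Y a b)) (fun a => @phi i3 i4 (z a)).
Proof.
move=> [L3 L4 L5 L6]; split.
- move=> u; have [u0 ->] := phi_surj2 W1 W3 u.
  rewrite -phi_dot // phi_eq0 // L3; split.
    by move=> [c ->]; exists c; rewrite phi_rowc.
  move=> [c Ec]; exists c; apply: (map2_inj W1 W3); rewrite Ec phi_rowc //.
- move=> c Ec; apply: L4; apply: (map2_inj W1 W3); rewrite phi_rowc // Ec.
  by apply: functional_extensionality => b; rewrite phi0.
- move=> c Ec; apply: L5; apply/(phi_eq0 W3 W4); by rewrite phi_lc.
- move=> t; have [t0 ->] := phi_surj W3 W4 t; have [c ->] := L6 t0.
  by exists c; rewrite phi_lc.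
Qed.

Hypothesis Hunit : forall i, W i -> @phi i i (zunit A i) = zunit B i.

Lemma scale_inj (V : lmodType k) (u : V) (c d : k) : u != 0 -> c *: u = d *: u -> c = d.
Proof.
move=> u0 /eqP; rewrite -subr_eq0 -scalerBl scaler_eq0 (negPf u0) orbF subr_eq0.
by move/eqP.
Qed.

Section Ext.
Variables (i i1 i3 i4 : int).
Hypotheses (Wni : ~~ W i) (W1 : W i1) (W3 : W i3) (W4 : W i4).
Hypothesis HzA : forall j, W j -> forall t : A j i, t = 0.
Hypothesis HzB : forall j, W j -> forall t : B j i, t = 0.
Hypothesis HuA : forall t : A i i, exists c : k, t = c *: zunit A i.
Hypothesis HuB : forall t : B i i, exists c : k, t = c *: zunit B i.
Hypothesis Hu0A : zunit A i != 0.
Hypothesis Hu0B : zunit B i != 0.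
Variables (xA : 'I_2 -> A i i1) (YA : 'I_2 -> 'I_2 -> A i1 i3) (xp : 'I_2 -> B i i1).
Hypothesis GXA : goodX W xA YA.
Hypothesis GXB : goodX W xp (fun a b => @phi i1 i3 (YA a b)).

Lemma key j (Wj : W j) (v : 'I_2 -> A i1 j) :
  dot xA v = 0 <-> dot xp (fun a => @phi i1 j (v a)) = 0.
Proof.
have [_ L2A] := GXA; have [_ L2B] := GXB.
rewrite (L2A j Wj) (L2B j Wj); split.
  by move=> [u ->]; exists (fun a => @phi i3 j (u a)); apply: phi_Ym.
move=> [u' Eu']; have [u0 Eu0] := phi_surj2 W3 Wj u'; exists u0.
by apply: (map2_inj W1 Wj); rewrite Eu' Eu0 phi_Ym.
Qed.

Definition coefA (t : A i i) : k := epsilon (inhabits 0) (fun c => t = c *: zunit A i).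
Lemma coefAE t : t = coefA t *: zunit A i.
Proof. exact: (epsilon_spec (inhabits 0) (fun c => t = c *: zunit A i) (HuA t)). Qed.
Lemma coefA_scale c : coefA (c *: zunit A i) = c.
Proof. by apply: (scale_inj Hu0A); rewrite -coefAE. Qed.

Definition unitmap (t : A i i) : B i i := coefA t *: zunit B i.

Definition vch j (t : A i j) : 'I_2 -> A i1 j :=
  epsilon (inhabits (fun _ => 0)) (fun v => t = dot xA v).
Definition rowmap j (t : A i j) : B i j := dot xp (fun a => @phi i1 j (vch t a)).

Lemma rowmapE j (Wj : W j) v : rowmap (dot xA v) = dot xp (fun a => @phi i1 j (v a)).
Proof.
rewrite /rowmap; set v' := vch _.
have E : dot xA v = dot xA v'.
  exact: (epsilon_spec (inhabits (fun _ => 0)) (fun w => dot xA v = dot xA w) (ex_intro _ v erefl)).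
have : dot xA (fun a => v' a - v a) = 0 by rewrite dotB E subrr.
move/(key Wj).
have -> : (fun a => @phi i1 j (v' a - v a)) = (fun a => @phi i1 j (v' a) - @phi i1 j (v a)).
  by apply: functional_extensionality => a; rewrite phiB.
by rewrite dotB => /eqP; rewrite subr_eq0 => /eqP.
Qed.

Lemma rowmap_lin j (Wj : W j) a (t s : A i j) : rowmap (a *: t + s) = a *: rowmap t + rowmap s.
Proof.
have [L1 _] := GXA.
have [v ->] := L1 j Wj t; have [w ->] := L1 j Wj s.
rewrite -dotDZ !rowmapE // -dotDZ; congr dot.
by apply: functional_extensionality => b; rewrite Hlin.
Qed.

Lemma rowmap_bij j (Wj : W j) : bijective (@rowmap j).
Proof.
have [L1 _] := GXA; have [L1' _] := GXB.
apply: (inj_surj_bij 0).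
  move=> t s; have [v ->] := L1 j Wj t; have [w ->] := L1 j Wj s.
  rewrite !rowmapE // => /eqP; rewrite -subr_eq0 -dotB => /eqP.
  have -> : (fun a => @phi i1 j (v a) - @phi i1 j (w a)) = (fun a => @phi i1 j (v a - w a)).
    by apply: functional_extensionality => a; rewrite phiB.
  by move/(key Wj); rewrite dotB => /eqP; rewrite subr_eq0 => /eqP.
move=> t'; have [v' ->] := L1' j Wj t'.
have [v0 ->] := phi_surj2 W1 Wj v'.
by exists (dot xA v0); rewrite rowmapE.
Qed.

Lemma rowmap_mul j l (Wj : W j) (Wl : W l) (t : A i j) (s : A j l) :
  rowmap (zmul A t s) = zmul B (rowmap t) (@phi j l s).
Proof.
have [L1 _] := GXA; have [v ->] := L1 j Wj t.
rewrite dot_zmul !rowmapE // dot_zmul; congr dot.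
by apply: functional_extensionality => a; rewrite Hmul.
Qed.

Lemma unitmap_lin a (t s : A i i) : unitmap (a *: t + s) = a *: unitmap t + unitmap s.
Proof.
rewrite /unitmap.
have -> : coefA (a *: t + s) = a * coefA t + coefA s.
  apply: (scale_inj Hu0A); rewrite -coefAE scalerDl -scalerA -!coefAE //.
by rewrite scalerDl scalerA.
Qed.

Lemma unitmap_bij : bijective unitmap.
Proof.
apply: (inj_surj_bij 0).
  move=> t s; rewrite /unitmap => /(scale_inj Hu0B) E.
  by rewrite (coefAE t) (coefAE s) E.
move=> t'; have [c ->] := HuB t'.
by exists (c *: zunit A i); rewrite /unitmap coefA_scale.
Qed.

Lemma unitmap_scale c : unitmap (c *: zunit A i) = c *: zunit B i.
Proof. by rewrite /unitmap coefA_scale. Qed.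

Definition psirow : forall j, A i j -> B i j :=
  @dupd (fun j => A i j -> B i j) (fun j => @rowmap j) i unitmap.
Definition psi0 (i0 : int) : forall j, A i0 j -> B i0 j :=
  @dupd (fun j => A i0 j -> B i0 j) (@phi i0) i (fun _ => 0).
Definition psi : forall i0 j, A i0 j -> B i0 j :=
  @dupd (fun i0 => forall j, A i0 j -> B i0 j) psi0 i psirow.

Lemma psi_ii : @psi i i = unitmap.
Proof. by rewrite /psi dupd_eq /psirow dupd_eq. Qed.
Lemma psi_ij j : j != i -> @psi i j = @rowmap j.
Proof. by move=> ji; rewrite /psi dupd_eq /psirow dupd_neq // eq_sym. Qed.
Lemma psi_ji j : j != i -> @psi j i = (fun _ => 0).
Proof. by move=> ji; rewrite /psi dupd_neq 1?eq_sym // /psi0 dupd_eq. Qed.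
Lemma psi_jl j l : j != i -> l != i -> @psi j l = @phi j l.
Proof. by move=> ji li; rewrite /psi dupd_neq 1?eq_sym // /psi0 dupd_neq // eq_sym. Qed.

Lemma Wne j : W j -> j != i.
Proof. by move=> Wj; apply/eqP => E; move: Wj; rewrite E (negPf Wni). Qed.
Lemma cs j : W j || (j == i) -> j = i \/ (W j /\ j != i).
Proof. by case/orP => [Wj|/eqP ->]; [right; split => //; exact: Wne | left]. Qed.

Lemma unitmap0 : unitmap 0 = 0.
Proof. by rewrite -(scale0r (zunit A i)) unitmap_scale scale0r. Qed.

Lemma rowmap0 j (Wj : W j) : @rowmap j 0 = 0.
Proof.
have := rowmap_lin Wj 1 0 0; rewrite !scale1r addr0 => H.
by apply: (@addrI _ (@rowmap j 0)); rewrite addr0 -H.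
Qed.
Lemma rowmapZ j (Wj : W j) c (t : A i j) : rowmap (c *: t) = c *: rowmap t.
Proof. by rewrite -(addr0 (c *: t)) rowmap_lin // rowmap0 // addr0. Qed.

Lemma ext_props :
 [/\ (forall j l, W j || (j == i) -> W l || (l == i) ->
        forall (a : k) (x y : A j l), @psi j l (a *: x + y) = a *: @psi j l x + @psi j l y),
     (forall j l, W j || (j == i) -> W l || (l == i) -> bijective (@psi j l)),
     (forall j l m, W j || (j == i) -> W l || (l == i) -> W m || (m == i) ->
        forall (x : A j l) (y : A l m), @psi j m (zmul A x y) = zmul B (@psi j l x) (@psi l m y)),
     (forall j, W j || (j == i) -> @psi j j (zunit A j) = zunit B j)
   & (forall j l, W j -> W l -> @psi j l = @phi j l)].
Proof.
split.
- move=> j l /cs [->|[Wj ji]] /cs [->|[Wl li]] a x y.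
  + by rewrite psi_ii unitmap_lin.
  + by rewrite psi_ij // rowmap_lin.
  + by rewrite psi_ji // scaler0 addr0.
  + by rewrite psi_jl // Hlin.
- move=> j l /cs [->|[Wj ji]] /cs [->|[Wl li]].
  + by rewrite psi_ii; exact: unitmap_bij.
  + by rewrite psi_ij //; exact: rowmap_bij.
  + rewrite psi_ji //; apply: (inj_surj_bij 0).
      by move=> t s _; rewrite (HzA Wj t) (HzA Wj s).
    by move=> t'; exists 0; rewrite (HzB Wj t').
  + by rewrite psi_jl //; exact: Hbij.
- move=> j l m /cs [->|[Wj ji]] /cs [->|[Wl li]] /cs [->|[Wm mi]] x y.
  + rewrite psi_ii (coefAE x) (coefAE y) zmulZl zmulZr zmul1l scalerA.
    by rewrite !unitmap_scale zmulZl zmulZr zmul1l scalerA.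
  + rewrite psi_ii psi_ij // (coefAE x) zmulZl zmul1l unitmap_scale zmulZl zmul1l.
    by rewrite rowmapZ.
  + by rewrite (psi_ji li) (HzA Wl y) zmul0r zmul0r psi_ii unitmap0.
  + by rewrite (psi_ij mi) (psi_ij li) (psi_jl li mi) rowmap_mul.
  + by rewrite (HzA Wj x) zmul0l (psi_ji ji) zmul0l.
  + by rewrite (HzA Wj x) zmul0l (psi_ji ji) zmul0l (psi_jl ji mi) phi0.
  + by rewrite (HzA Wl y) zmul0r (psi_ji ji) (psi_ji li) zmul0r.
  + by rewrite (psi_jl ji li) (psi_jl li mi) (psi_jl ji mi) Hmul.
- move=> j /cs [->|[Wj ji]].
    by rewrite psi_ii -(scale1r (zunit A i)) unitmap_scale scale1r.
  by rewrite psi_jl // Hunit.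
- by move=> j l Wj Wl; rewrite psi_jl //; exact: Wne.
Qed.
End Ext.
Lemma ext_left (i i1 i3 i4 : int) : ~~ W i -> W i1 -> W i3 -> W i4 ->
  (forall j, W j -> forall t : A j i, t = 0) -> (forall j, W j -> forall t : B j i, t = 0) ->
  (forall t : A i i, exists c : k, t = c *: zunit A i) ->
  (forall t : B i i, exists c : k, t = c *: zunit B i) ->
  zunit A i != 0 -> zunit B i != 0 ->
  forall xA YA zA xB YB zB,
  @goodYZ k A i1 i3 i4 YA zA -> @goodX k A W i i1 i3 xA YA ->
  @goodYZ k B i1 i3 i4 YB zB -> @goodX k B W i i1 i3 xB YB ->
  exists psi : forall j l, A j l -> B j l,
 [/\ (forall j l, W j || (j == i) -> W l || (l == i) ->
        forall (a : k) (x y : A j l), psi j l (a *: x + y) = a *: psi j l x + psi j l y),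
     (forall j l, W j || (j == i) -> W l || (l == i) -> bijective (psi j l)),
     (forall j l m, W j || (j == i) -> W l || (l == i) -> W m || (m == i) ->
        forall (x : A j l) (y : A l m), psi j m (zmul A x y) = zmul B (psi j l x) (psi l m y)),
     (forall j, W j || (j == i) -> psi j j (zunit A j) = zunit B j)
   & (forall j l, W j -> W l -> psi j l = @phi j l)].
Proof.
move=> Wni W1 W3 W4 HzA HzB HuA HuB Hu0A Hu0B xA YA zA xB YB zB GYA GXA GYB GXB.
have T := goodYZ_transport W1 W3 W4 GYA.
have [C [C' [K [K' [E1 E2 CC CC']]]]] := good_uniq GYB T.
have GXB' := goodX_change GXB E1 E2 CC CC'.
eexists; exact: (ext_props Wni W1 W3 HzA HzB HuA HuB Hu0A Hu0B GXA GXB').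
Qed.

End Iso.
Lemma img_sub_ker (K : fieldType) (U V W : vectType K) (f : 'Hom(U, V)) (g : 'Hom(V, W)) :
  (forall u, g (f u) = 0) -> (limg f <= lker g)%VS.
Proof. by move=> H; apply/subvP => y /memv_imgP [u _ ->]; rewrite memv_ker H. Qed.

Section Exact.
Variables (K : fieldType) (U V W X : vectType K).

Lemma exact_from_dims (d0 : 'Hom(U, V)) (d1 : 'Hom(V, W)) (d2 : 'Hom(W, X)) :
  (forall u, d1 (d0 u) = 0) -> (forall v, d2 (d1 v) = 0) ->
  (\dim (lker d0) + (\dim (lker d1) - \dim (limg d0)) + (\dim (lker d2) - \dim (limg d1))
     + (\dim {: X} - \dim (limg d2)))%N = 0%N ->
  [/\ forall v, d1 v = 0 -> exists u, v = d0 u,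
      forall w, d2 w = 0 -> exists v, w = d1 v
    & forall x, exists w, x = d2 w].
Proof.
move=> C1 C2 /eqP; rewrite !addn_eq0 !subn_eq0 => /andP[/andP[/andP[_ h1] h2] h3].
have E1 : limg d0 = lker d1.
  by apply/eqP; rewrite eqEdim img_sub_ker ?h1 ?h2.
have E2 : limg d1 = lker d2.
  by apply/eqP; rewrite eqEdim img_sub_ker ?h1 ?h2.
have E3 : limg d2 = fullv.
  by apply/eqP; rewrite eqEdim subvf h3.
split.
- move=> v /eqP; rewrite -memv_ker -E1 => /memv_imgP [u _ ->]; by exists u.
- move=> w /eqP; rewrite -memv_ker -E2 => /memv_imgP [v _ ->]; by exists v.
- move=> x; have : x \in limg d2 by rewrite E3 memvf.
  by move=> /memv_imgP [w _ ->]; exists w.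
Qed.

Lemma all_zero_dim0 (T : vectType K) : \dim {: T} = 0%N -> forall t : T, t = 0.
Proof.
move=> /eqP; rewrite dimv_eq0 => /eqP E t.
by apply/eqP; rewrite -memv0 -E memvf.
Qed.

Lemma dim1_span (T : vectType K) (u : T) : \dim {: T} = 1%N -> u != 0 ->
  forall t : T, exists c : K, t = c *: u.
Proof.
move=> D u0 t; apply/vlineP.
have -> : (<[u]> = fullv)%VS.
  by apply/eqP; rewrite eqEdim subvf dim_vline u0 D.
exact: memvf.
Qed.

End Exact.

From Stdlib Require Import ZArith Lia.

Definition Zof (x : int) : Z :=
  match x with Posz n => Z.of_nat n | Negz n => (- Z.of_nat n - 1)%Z end.

Lemma Zof_add (x y : int) : Zof (x + y) = (Zof x + Zof y)%Z.
Proof.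
change (x + y) with (intZmod.addz x y).
case: x => m; case: y => n /=.
- by rewrite -plusE Nat2Z.inj_add.
- case: ltnP => /= [/ltP h|/leP h]; rewrite -?minusE; lia.
- case: ltnP => /= [/ltP h|/leP h]; rewrite -?minusE; lia.
- rewrite -plusE; lia.
Qed.

Lemma Zof_opp (x : int) : Zof (- x) = (- Zof x)%Z.
Proof.
change (- x) with (intZmod.oppz x).
case: x => [[|n]|n] /=; lia.
Qed.

Lemma Zof_nat (n : nat) : Zof (n%:R) = Z.of_nat n.
Proof. by rewrite natz. Qed.

Lemma Zof_le (x y : int) : (x <= y) = (Zof x <=? Zof y)%Z.
Proof.
change (x <= y) with (intOrdered.lez x y).
case: x => m; case: y => n /=; apply/idP/idP.
- by move/leP => h; apply/Z.leb_le; lia.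
- by move/Z.leb_le => h; apply/leP; lia.
- by [].
- by move/Z.leb_le => h; lia.
- by move=> _; apply/Z.leb_le; lia.
- by [].
- by move/leP => h; apply/Z.leb_le; lia.
- by move/Z.leb_le => h; apply/leP; lia.
Qed.

Lemma Zof_lt (x y : int) : (x < y) = (Zof x <? Zof y)%Z.
Proof.
change (x < y) with (intOrdered.ltz x y).
case: x => m; case: y => n /=; apply/idP/idP.
- by move/ltP => h; apply/Z.ltb_lt; lia.
- by move/Z.ltb_lt => h; apply/ltP; lia.
- by [].
- by move/Z.ltb_lt => h; lia.
- by move=> _; apply/Z.ltb_lt; lia.
- by [].
- by move/ltP => h; apply/Z.ltb_lt; lia.
- by move/Z.ltb_lt => h; apply/ltP; lia.
Qed.

Lemma Zof_inj : injective Zof.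
Proof. case=> m; case=> n /= h; first [ (congr Posz; lia) | (congr Negz; lia) | (exfalso; lia) ]. Qed.

Lemma Zof_eq (x y : int) : (x == y) = (Zof x =? Zof y)%Z.
Proof.
apply/eqP/idP => [->|/Z.eqb_eq h]; first by apply/Z.eqb_eq.
exact: Zof_inj.
Qed.

Lemma le_Z (x y : int) : (x <= y) <-> (Zof x <= Zof y)%Z.
Proof. by rewrite Zof_le; split => /Z.leb_le. Qed.
Lemma lt_Z (x y : int) : (x < y) <-> (Zof x < Zof y)%Z.
Proof. by rewrite Zof_lt; split => /Z.ltb_lt. Qed.
Lemma eq_Z (x y : int) : x = y <-> Zof x = Zof y.
Proof. by split => [->|]; [|exact: Zof_inj]. Qed.
Lemma neq_Z (x y : int) : (x != y) <-> Zof x <> Zof y.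
Proof. by split => [/eqP h e|h]; [apply: h; exact: Zof_inj | apply/eqP => e; apply: h; rewrite e]. Qed.

Lemma Zof_1 : Zof 1 = 1%Z. Proof. by []. Qed.
Lemma Zof_0 : Zof 0 = 0%Z. Proof. by []. Qed.
Ltac znorm H := rewrite ?Zof_nat ?Zof_add ?Zof_opp ?Zof_nat ?Zof_1 ?Zof_0 in H; cbn [Zof] in H.
Ltac ilia :=
  repeat match goal with
  | H : is_true (@Order.le _ _ _ _) |- _ => move/le_Z in H; znorm H
  | H : is_true (@Order.lt _ _ _ _) |- _ => move/lt_Z in H; znorm H
  | H : is_true (~~ (@eq_op _ (_ : int) _)) |- _ => move/neq_Z in H; znorm H
  | H : @eq int _ _ |- _ => move/eq_Z in H; znorm H
  end;
  first [apply/le_Z | apply/lt_Z | apply/neq_Z | apply/eq_Z | idtac];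
  rewrite ?Zof_nat ?Zof_add ?Zof_opp ?Zof_nat ?Zof_1 ?Zof_0; cbn [Zof]; lia.

From mathcomp Require Import all_boot all_order all_algebra.
Local Open Scope ring_scope.

Section Op.
Variable (k : fieldType).

Definition zop (A : zalg k) : zalg k.
refine (@ZAlg k (fun i j => A j i) (fun i j l x y => zmul A y x) (fun i => zunit A i) _ _ _ _ _).
- by move=> i j l a x y z; rewrite zmulDr.
- by move=> i j l a x y z; rewrite zmulDl.
- by move=> i j l m x y z; rewrite zmulA.
- by move=> i j x; rewrite zmul1r.
- by move=> i j x; rewrite zmul1l.
Defined.

Definition isoW (A B : zalg k) (P : int -> bool) (phi : forall i j : int, A i j -> B i j) : Prop :=
    [/\ (forall i j, P i -> P j ->
           forall (a : k) (x y : A i j), phi i j (a *: x + y) = a *: phi i j x + phi i j y),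
        (forall i j, P i -> P j -> bijective (phi i j)),
        (forall i j l, P i -> P j -> P l ->
           forall (x : A i j) (y : A j l), phi i l (zmul A x y) = zmul B (phi i j x) (phi j l y))
      & (forall i, P i -> phi i i (zunit A i) = zunit B i)].
Arguments isoW : clear implicits.

Lemma isoW_op (A B : zalg k) P phi : isoW A B P phi ->
  isoW (zop A) (zop B) P (fun i j => phi j i).
Proof.
move=> [H1 H2 H3 H4]; split.
- by move=> i j Pi Pj; exact: H1.
- by move=> i j Pi Pj; exact: H2.
- by move=> i j l Pi Pj Pl x y; exact: (H3 l j i).
- by move=> i Pi; exact: H4.
Qed.

Lemma isoW_unop (A B : zalg k) P phi : isoW (zop A) (zop B) P phi ->
  isoW A B P (fun i j => phi j i).
Proof. by move=> H; exact: (isoW_op H). Qed.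

Lemma isoW_ext (A B : zalg k) P Q phi : (forall j, P j = Q j) -> isoW A B P phi -> isoW A B Q phi.
Proof.
by move=> E; have -> : P = Q by apply: functional_extensionality.
Qed.

End Op.
Definition mk2 (T : Type) (a b : T) : 'I_2 -> T := fun i => if i == ord0 then a else b.
Lemma mk2_0 T (a b : T) : mk2 a b ord0 = a. Proof. by rewrite /mk2 eqxx. Qed.
Lemma mk2_1 T (a b : T) : mk2 a b ord_max = b. Proof. by []. Qed.
Lemma mk2_eta T (f : 'I_2 -> T) : f = mk2 (f ord0) (f ord_max).
Proof. by apply: functional_extensionality => a; case: (ord2P a) => ->. Qed.
Lemma fun2_eq T (f g : 'I_2 -> T) : f ord0 = g ord0 -> f ord_max = g ord_max -> f = g.
Proof. by move=> h0 h1; apply: functional_extensionality => a; case: (ord2P a) => ->. Qed.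

Section Cubic.
Variables (k : fieldType) (A : zalg k) (res : forall l : int, res_data A l).
Hypothesis Hcon : zconnected A.
Hypothesis Hres : forall l, is_cubic_resolution (res l).
Hypothesis Hgor : forall i : int, exists l0 : int,
   ext_total i (res l0) = 1%N /\ forall l, l != l0 -> ext_total i (res l) = 0%N.

Lemma zero_el i j : j < i -> forall t : A i j, t = 0.
Proof. move=> ji; apply: all_zero_dim0; exact: Hcon.1. Qed.

Lemma unit_ne0 i : zunit A i != 0.
Proof.
apply/eqP => E.
have H : forall t : A i i, t = 0 by move=> t; rewrite -(zmul1r t) E zmul0r.
have : \dim {: A i i} = 0%N.
  apply/eqP; rewrite dimv_eq0; apply/eqP/vspaceP => t.
  by rewrite memvf memv0 (H t) eqxx.
by rewrite -/(zdim A i i) Hcon.2.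
Qed.

Lemma unit_span i (t : A i i) : exists c : k, t = c *: zunit A i.
Proof. apply: dim1_span; [exact: Hcon.2 | exact: unit_ne0]. Qed.

Section D.
Variables (i l : int).
Let r := res l.
Lemma d0E (x : A i l) : ext_d0 i r x = (zmul A x (rx1 r), zmul A x (rx2 r)).
Proof. by rewrite /ext_d0 linfunE_gen // => a u v; rewrite !zmulDl. Qed.
Lemma d1E (v : prod (A i (l + 1)) (A i (l + 1))) : ext_d1 i r v =
   (zmul A v.1 (ry11 r) + zmul A v.2 (ry21 r), zmul A v.1 (ry12 r) + zmul A v.2 (ry22 r)).
Proof.
rewrite /ext_d1 linfunE_gen // => a [u1 u2] [v1 v2] /=.
rewrite !zmulDl; apply: injective_projections => /=.
  by rewrite scalerDr addrACA.
by rewrite scalerDr addrACA.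
Qed.
Lemma d2E (u : prod (A i (l + 3)) (A i (l + 3))) : ext_d2 i r u =
   zmul A u.1 (rz1 r) + zmul A u.2 (rz2 r).
Proof.
rewrite /ext_d2 linfunE_gen // => a [u1 u2] [v1 v2] /=.
by rewrite !zmulDl scalerDr addrACA.
Qed.
End D.

Lemma xY0 l : zmul A (rx1 (res l)) (ry11 (res l)) + zmul A (rx2 (res l)) (ry21 (res l)) = 0 /\
              zmul A (rx1 (res l)) (ry12 (res l)) + zmul A (rx2 (res l)) (ry22 (res l)) = 0.
Proof.
have [_ _ C3 _] := Hres l; split.
  apply/(C3 (l + 3)); exists (zunit A (l + 3)), 0.
  by rewrite !zmul1r !zmul0r !addr0.
apply/(C3 (l + 3)); exists 0, (zunit A (l + 3)).
by rewrite !zmul1r !zmul0r !add0r.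
Qed.

Lemma Yz0 l : zmul A (ry11 (res l)) (rz1 (res l)) + zmul A (ry12 (res l)) (rz2 (res l)) = 0 /\
              zmul A (ry21 (res l)) (rz1 (res l)) + zmul A (ry22 (res l)) (rz2 (res l)) = 0.
Proof.
have [_ C2 _ _] := Hres l.
by apply/(C2 (l + 4)); exists (zunit A (l + 4)); rewrite !zmul1r.
Qed.

Lemma ext_exact i l : ext_total i (res l) = 0%N ->
 [/\ (forall v1 v2 : A i (l + 1),
        zmul A v1 (ry11 (res l)) + zmul A v2 (ry21 (res l)) = 0 ->
        zmul A v1 (ry12 (res l)) + zmul A v2 (ry22 (res l)) = 0 ->
        exists x : A i l, v1 = zmul A x (rx1 (res l)) /\ v2 = zmul A x (rx2 (res l))),
     (forall u1 u2 : A i (l + 3), zmul A u1 (rz1 (res l)) + zmul A u2 (rz2 (res l)) = 0 ->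
        exists v1 v2 : A i (l + 1),
          u1 = zmul A v1 (ry11 (res l)) + zmul A v2 (ry21 (res l)) /\
          u2 = zmul A v1 (ry12 (res l)) + zmul A v2 (ry22 (res l)))
   & (forall w : A i (l + 4), exists u1 u2 : A i (l + 3),
        w = zmul A u1 (rz1 (res l)) + zmul A u2 (rz2 (res l)))].
Proof.
move=> H0.
have [xy1 xy2] := xY0 l; have [yz1 yz2] := Yz0 l.
have C1 : forall x, ext_d1 i (res l) (ext_d0 i (res l) x) = 0.
  by move=> x; rewrite d0E d1E /= !zmulA -!zmulDr2 xy1 xy2 !zmul0r.
have C2 : forall v, ext_d2 i (res l) (ext_d1 i (res l) v) = 0.
  move=> v; rewrite d1E d2E /= !zmulDl2 !zmulA addrACA -!zmulDr2 yz1 yz2 !zmul0r.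
  by rewrite addr0.
have [E1 E2 E3] := exact_from_dims C1 C2 H0.
split.
- move=> v1 v2 h1 h2.
  have /E1 [x Ex] : ext_d1 i (res l) (v1, v2) = 0 by rewrite d1E /= h1 h2.
  by exists x; move: Ex; rewrite d0E => [[-> ->]].
- move=> u1 u2 h.
  have /E2 [[v1 v2] Ev] : ext_d2 i (res l) (u1, u2) = 0 by rewrite d2E /= h.
  by exists v1, v2; move: Ev; rewrite d1E => [[-> ->]].
- move=> w; have [[u1 u2] ->] := E3 w.
  by exists u1, u2; rewrite d2E.
Qed.
Lemma ext0 i l : l != i - 4 -> ext_total i (res l) = 0%N.
Proof.
have [l0 [H1 H0]] := Hgor i.
move=> hl; suff E : l0 = i - 4 by apply: H0; rewrite E.
apply/eqP; apply: contraT => ne.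
have h : i - 4 != l0 by rewrite eq_sym.
move: (H0 _ h); rewrite /ext_total.
have -> : limg (ext_d2 i (res (i - 4))) = 0%VS.
  apply/eqP; rewrite -subv0; apply/subvP => w /memv_imgP [u _ ->].
  have lt : i - 4 + 3 < i by ilia.
  by rewrite memv0 d2E (zero_el lt u.1) (zero_el lt u.2) !zmul0l addr0.
rewrite dimv0 subn0 => /eqP; rewrite !addn_eq0 => /andP[_ /eqP].
have -> : i - 4 + 4 = i by ilia.
by rewrite Hcon.2.
Qed.

Lemma complex2 i l (u1 u2 : A i (l + 1)) :
  zmul A (zmul A u1 (ry11 (res l)) + zmul A u2 (ry21 (res l))) (rz1 (res l)) +
  zmul A (zmul A u1 (ry12 (res l)) + zmul A u2 (ry22 (res l))) (rz2 (res l)) = 0.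
Proof.
have [yz1 yz2] := Yz0 l.
by rewrite !zmulDl2 !zmulA addrACA -!zmulDr2 yz1 yz2 !zmul0r addr0.
Qed.
Definition xv l : 'I_2 -> A l (l + 1) := mk2 (rx1 (res l)) (rx2 (res l)).
Definition Ymat l : 'I_2 -> 'I_2 -> A (l + 1) (l + 3) :=
  mk2 (mk2 (ry11 (res l)) (ry12 (res l))) (mk2 (ry21 (res l)) (ry22 (res l))).
Definition zv l : 'I_2 -> A (l + 3) (l + 4) := mk2 (rz1 (res l)) (rz2 (res l)).

Lemma scal_unit_eq0 j (c : k) : c *: zunit A j = 0 -> c = 0.
Proof. by move/eqP; rewrite scaler_eq0 (negPf (unit_ne0 j)) orbF => /eqP. Qed.

Lemma zmulU j l' (c : k) (y : A j l') : zmul A (c *: zunit A j) y = c *: y.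
Proof. by rewrite zmulZl zmul1l. Qed.
Lemma zmulU' j l' (c : k) (y : A j l') : zmul A y (c *: zunit A l') = c *: y.
Proof. by rewrite zmulZr zmul1r. Qed.

Lemma left_goodYZ l : goodYZ (Ymat l) (zv l).
Proof.
have [E1 E2 _] := ext_exact (ext0 (i := l + 1) (l := l) ltac:(ilia)).
have [_ F2 F3] := ext_exact (ext0 (i := l + 3) (l := l) ltac:(ilia)).
split.
- move=> u; rewrite /dot sum2 /zv mk2_0 mk2_1; split.
    move=> /E2 [v1 [v2 [Eu1 Eu2]]].
    have [c1 Ec1] := unit_span v1; have [c2 Ec2] := unit_span v2.
    exists (mk2 c1 c2); apply: fun2_eq; rewrite /rowc sum2 !mk2_0 !mk2_1 /Ymat !mk2_0 !mk2_1.
      by rewrite Eu1 Ec1 Ec2 !zmulU.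
    by rewrite Eu2 Ec1 Ec2 !zmulU.
  move=> [c ->]; rewrite /rowc !sum2 /Ymat !mk2_0 !mk2_1.
  by have := complex2 (c ord0 *: zunit A (l + 1)) (c ord_max *: zunit A (l + 1)); rewrite !zmulU.
- move=> c Ec.
  have h0 := equal_f Ec ord0; have h1 := equal_f Ec ord_max.
  move: h0 h1; rewrite /rowc !sum2 /Ymat !mk2_0 !mk2_1 => h0 h1.
  have := E1 (c ord0 *: zunit A (l + 1)) (c ord_max *: zunit A (l + 1)).
  rewrite !zmulU => /(_ h0 h1) [x [Ex1 Ex2]].
  have lt : l < l + 1 by ilia.
  move: Ex1 Ex2; rewrite (zero_el lt x) !zmul0l => /scal_unit_eq0 e0 /scal_unit_eq0 e1.
  by move=> a; case: (ord2P a) => ->.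
- move=> c; rewrite /lc sum2 /zv mk2_0 mk2_1 => Ec.
  have := F2 (c ord0 *: zunit A (l + 3)) (c ord_max *: zunit A (l + 3)).
  rewrite !zmulU => /(_ Ec) [v1 [v2 [Ev1 Ev2]]].
  have lt : l + 1 < l + 3 by ilia.
  move: Ev1 Ev2; rewrite (zero_el lt v1) (zero_el lt v2) !zmul0l addr0.
  move=> /scal_unit_eq0 e0 /scal_unit_eq0 e1.
  by move=> a; case: (ord2P a) => ->.
- move=> t; have [u1 [u2 ->]] := F3 t.
  have [c1 ->] := unit_span u1; have [c2 ->] := unit_span u2.
  by exists (mk2 c1 c2); rewrite /lc sum2 /zv !mk2_0 !mk2_1 !zmulU.
Qed.
Lemma left_goodX l (W : int -> bool) (HW : forall j, W j -> j != l) : goodX W (xv l) (Ymat l).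
Proof.
have [_ _ C3 C4] := Hres l; split.
  move=> j Wj t; have [v1 [v2 Et]] := C4 j t (HW j Wj).
  by exists (mk2 v1 v2); rewrite /dot sum2 /xv ?mk2_0 ?mk2_1.
move=> j Wj v; rewrite /dot sum2 /xv mk2_0 mk2_1 (C3 j); split.
  move=> [u1 [u2 [E1 E2]]]; exists (mk2 u1 u2); apply: fun2_eq;
    by rewrite /Ym !sum2 /Ymat ?mk2_0 ?mk2_1.
move=> [u ->]; exists (u ord0), (u ord_max).
by rewrite /Ym !sum2 /Ymat ?mk2_0 ?mk2_1.
Qed.

Definition YT l : 'I_2 -> 'I_2 -> zop A (l + 3) (l + 1) := fun a b => Ymat l b a.
Definition xvo l : 'I_2 -> zop A (l + 1) l := xv l.
Definition zvo l : 'I_2 -> zop A (l + 4) (l + 3) := zv l.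

Lemma zopE i j m (x : zop A i j) (y : zop A j m) : zmul (zop A) x y = zmul A y x.
Proof. by []. Qed.

Lemma right_goodYZ l : @goodYZ k (zop A) (l + 3) (l + 1) l (YT l) (xvo l).
Proof.
have [_ C2 C3 C4] := Hres l; split.
- move=> u; rewrite /dot sum2 !zopE /xvo /xv mk2_0 mk2_1 (C3 (l + 3)); split.
    move=> [w1 [w2 [E1 E2]]].
    have [c1 Ec1] := unit_span w1; have [c2 Ec2] := unit_span w2.
    exists (mk2 c1 c2); apply: fun2_eq; rewrite /rowc sum2 ?mk2_0 ?mk2_1 /YT /Ymat ?mk2_0 ?mk2_1.
      by rewrite E1 Ec1 Ec2 !zmulU'.
    by rewrite E2 Ec1 Ec2 !zmulU'.
  move=> [c ->]; exists (c ord0 *: zunit A (l + 3)), (c ord_max *: zunit A (l + 3)).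
  by rewrite /rowc !sum2 /YT /Ymat ?mk2_0 ?mk2_1 !zmulU'.
- move=> c Ec.
  have h0 := equal_f Ec ord0; have h1 := equal_f Ec ord_max.
  move: h0 h1; rewrite /rowc !sum2 /YT /Ymat ?mk2_0 ?mk2_1 => h0 h1.
  have := C2 (l + 3) (c ord0 *: zunit A (l + 3)) (c ord_max *: zunit A (l + 3)).
  rewrite !zmulU' => -[/(_ (conj h0 h1)) [w [Ew1 Ew2]] _].
  have lt : l + 3 < l + 4 by ilia.
  move: Ew1 Ew2; rewrite (zero_el lt w) !zmul0r => /scal_unit_eq0 e0 /scal_unit_eq0 e1.
  by move=> a; case: (ord2P a) => ->.
- move=> c; rewrite /lc sum2 /xvo /xv mk2_0 mk2_1 => Ec.
  have := C3 (l + 1) (c ord0 *: zunit A (l + 1)) (c ord_max *: zunit A (l + 1)).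
  rewrite !zmulU' => -[/(_ Ec) [u1 [u2 [Eu1 Eu2]]] _].
  have lt : l + 1 < l + 3 by ilia.
  move: Eu1 Eu2; rewrite (zero_el lt u1) (zero_el lt u2) !zmul0r addr0.
  move=> /scal_unit_eq0 e0 /scal_unit_eq0 e1.
  by move=> a; case: (ord2P a) => ->.
- move=> t.
  have ne : l + 1 != l by ilia.
  have [v1 [v2 ->]] := C4 (l + 1) t ne.
  have [c1 ->] := unit_span v1; have [c2 ->] := unit_span v2.
  by exists (mk2 c1 c2); rewrite /lc sum2 /xvo /xv ?mk2_0 ?mk2_1 !zmulU'.
Qed.

Lemma right_goodX l (W : int -> bool) (HW : forall j, W j -> j != l + 4) :
  @goodX k (zop A) W (l + 4) (l + 3) (l + 1) (zvo l) (YT l).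
Proof.
split.
  move=> j Wj t.
  have hl : l != j - 4 by move: (HW j Wj) => h; ilia.
  have [_ _ F3] := ext_exact (ext0 hl).
  have [u1 [u2 Et]] := F3 t.
  by exists (mk2 u1 u2); rewrite /dot sum2 !zopE /zvo /zv ?mk2_0 ?mk2_1.
move=> j Wj v.
have hl : l != j - 4 by move: (HW j Wj) => h; ilia.
have [_ F2 _] := ext_exact (ext0 hl).
rewrite /dot sum2 !zopE /zvo /zv mk2_0 mk2_1; split.
  move=> /F2 [v1 [v2 [E1 E2]]]; exists (mk2 v1 v2); apply: fun2_eq;
    by rewrite /Ym !sum2 !zopE /YT /Ymat ?mk2_0 ?mk2_1.
move=> [u ->]; rewrite /Ym !sum2 !zopE /YT /Ymat ?mk2_0 ?mk2_1.
exact: complex2.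
Qed.
End Cubic.

Definition Wd (a b : int) : int -> bool := fun j => (a <= j) && (j <= b).

Section Final.
Variables (k : fieldType) (A B : zalg k).
Variables (resA : forall l, res_data A l) (resB : forall l, res_data B l).
Hypothesis HconA : zconnected A.
Hypothesis HresA : forall l, is_cubic_resolution (resA l).
Hypothesis HgorA : forall i : int, exists l0 : int,
   ext_total i (resA l0) = 1%N /\ forall l, l != l0 -> ext_total i (resA l) = 0%N.
Hypothesis HconB : zconnected B.
Hypothesis HresB : forall l, is_cubic_resolution (resB l).
Hypothesis HgorB : forall i : int, exists l0 : int,
   ext_total i (resB l0) = 1%N /\ forall l, l != l0 -> ext_total i (resB l) = 0%N.

Lemma left_step a b (hab : a + 3 <= b) phi :
  @isoW k A B (Wd a b) phi -> exists psi, @isoW k A B (Wd (a - 1) b) psi /\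
     forall j l, Wd a b j -> Wd a b l -> psi j l = phi j l.
Proof.
move=> [H1 H2 H3 H4].
set l := a - 1.
have nW : ~~ Wd a b l by apply/negP => /andP [h1 h2]; ilia.
have W1 : Wd a b (l + 1) by apply/andP; split; ilia.
have W3 : Wd a b (l + 3) by apply/andP; split; ilia.
have W4 : Wd a b (l + 4) by apply/andP; split; ilia.
have HW : forall j, Wd a b j -> j != l by move=> j /andP [h1 h2]; ilia.
have zA : forall j, Wd a b j -> forall t : A j l, t = 0.
  by move=> j /andP [h1 h2] t; apply: (zero_el HconA); ilia.
have zB : forall j, Wd a b j -> forall t : B j l, t = 0.
  by move=> j /andP [h1 h2] t; apply: (zero_el HconB); ilia.
have [psi [P1 P2 P3 P4 P5]] := ext_left H1 H2 H3 H4 nW W1 W3 W4 zA zB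
  (unit_span HconA (i := l)) (unit_span HconB (i := l)) (unit_ne0 HconA l) (unit_ne0 HconB l)
  (left_goodYZ HconA HresA HgorA l) (left_goodX HresA HW)
  (left_goodYZ HconB HresB HgorB l) (left_goodX HresB HW).
exists psi; split => //.
apply: (@isoW_ext _ _ _ (fun j => Wd a b j || (j == l))); last by split.
move=> j; rewrite /Wd; apply/idP/idP.
  case/orP => [/andP [h1 h2]|/eqP ->]; apply/andP; split; ilia.
move=> /andP [h1 h2]; apply/orP.
have [e|ne] := eqVneq j l; first by right; apply/eqP.
by left; apply/andP; split; ilia.
Qed.

Lemma right_step a b (hab : a + 3 <= b) phi :
  @isoW k A B (Wd a b) phi -> exists psi, @isoW k A B (Wd a (b + 1)) psi /\
     forall j l, Wd a b j -> Wd a b l -> psi j l = phi j l.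
Proof.
move=> /isoW_op [H1 H2 H3 H4].
set l := b - 3.
have nW : ~~ Wd a b (l + 4) by apply/negP => /andP [h1 h2]; ilia.
have W1 : Wd a b (l + 3) by apply/andP; split; ilia.
have W3 : Wd a b (l + 1) by apply/andP; split; ilia.
have W4 : Wd a b l by apply/andP; split; ilia.
have HW : forall j, Wd a b j -> j != l + 4 by move=> j /andP [h1 h2]; ilia.
have zA : forall j, Wd a b j -> forall t : zop A j (l + 4), t = 0.
  by move=> j /andP [h1 h2] t; apply: (zero_el HconA); ilia.
have zB : forall j, Wd a b j -> forall t : zop B j (l + 4), t = 0.
  by move=> j /andP [h1 h2] t; apply: (zero_el HconB); ilia.
have [psi [P1 P2 P3 P4 P5]] := ext_left H1 H2 H3 H4 nW W1 W3 W4 zA zB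
  (unit_span HconA (i := l + 4)) (unit_span HconB (i := l + 4))
  (unit_ne0 HconA (l + 4)) (unit_ne0 HconB (l + 4))
  (right_goodYZ HconA HresA l) (right_goodX HconA HresA HgorA HW)
  (right_goodYZ HconB HresB l) (right_goodX HconB HresB HgorB HW).
exists (fun i j => psi j i); split; last first.
  by move=> j m Wj Wm; rewrite (P5 m j Wm Wj).
apply: (@isoW_ext _ _ _ (fun j => Wd a b j || (j == l + 4))); last first.
  by apply: isoW_unop; split.
move=> j; rewrite /Wd; apply/idP/idP.
  case/orP => [/andP [h1 h2]|/eqP ->]; apply/andP; split; ilia.
move=> /andP [h1 h2]; apply/orP.
have [e|ne] := eqVneq j (l + 4); first by right; apply/eqP.
by left; apply/andP; split; ilia.
Qed.
Definition Wn (n : nat) := Wd (- (n%:Z)) (3 + n%:Z).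

Lemma both_step n phi : @isoW k A B (Wn n) phi -> exists psi, @isoW k A B (Wn n.+1) psi /\
     forall j l, Wn n j -> Wn n l -> psi j l = phi j l.
Proof.
move=> H.
have [psi1 [I1 E1]] := @left_step (- (n%:Z)) (3 + n%:Z) ltac:(ilia) phi H.
have [psi2 [I2 E2]] := @right_step (- (n%:Z) - 1) (3 + n%:Z) ltac:(ilia) psi1 I1.
exists psi2; split.
  apply: (isoW_ext _ I2) => j; rewrite /Wn /Wd.
  have -> : - (n%:Z) - 1 = - (n.+1%:Z) by ilia.
  by have -> : 3 + n%:Z + 1 = 3 + n.+1%:Z by ilia.
move=> j l /andP [h1 h2] /andP [h3 h4].
rewrite E2 ?E1 //; apply/andP; split; ilia.
Qed.

Definition FT := forall i j, A i j -> B i j.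

Lemma step_fun : exists G : nat -> FT -> FT, forall n phi, @isoW k A B (Wn n) phi ->
  @isoW k A B (Wn n.+1) (G n phi) /\ forall j l, Wn n j -> Wn n l -> G n phi j l = phi j l.
Proof.
pose P n (phi psi : FT) := @isoW k A B (Wn n) phi ->
  @isoW k A B (Wn n.+1) psi /\ forall j l, Wn n j -> Wn n l -> psi j l = phi j l.
exists (fun n phi => epsilon (inhabits phi) (P n phi)) => n phi.
apply: (epsilon_spec (inhabits phi) (P n phi)).
case: (Classical_Prop.classic (@isoW k A B (Wn n) phi)) => [H|nH].
  have [psi Hpsi] := both_step H; by exists psi.
by exists phi => /nH.
Qed.

Lemma Wn_mono (n m : nat) i : (n <= m)%nat -> Wn n i -> Wn m i.
Proof.
move=> nm0 /andP [h1 h2]; have nm : n%:Z <= m%:Z by rewrite lez_nat nm0.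
by apply/andP; split; ilia.
Qed.

Lemma Wn_abs (n : nat) i : (absz i <= n)%nat -> Wn n i.
Proof.
move=> h0; have h : (absz i)%:Z <= n%:Z by rewrite lez_nat h0.
have ha : Z.of_nat (absz i) = Z.abs (Zof i) by case: i {h h0} => m /=; lia.
by apply/andP; split; ilia.
Qed.

Lemma global_iso phi0 : @isoW k A B (Wn 0) phi0 -> exists psi, @isoW k A B (fun _ => true) psi.
Proof.
move=> H0; have [G HG] := step_fun.
pose fix sq (n : nat) : FT := if n is m.+1 then G m (sq m) else phi0.
have Iso : forall n, @isoW k A B (Wn n) (sq n).
  by elim=> [|n IH] //=; exact: (HG n (sq n) IH).1.
have Ag : forall n m, (n <= m)%nat -> forall i j, Wn n i -> Wn n j -> sq m i j = sq n i j.
  move=> n; elim=> [|m IH] nm i j Wi Wj.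
    by move: nm; rewrite leqn0 => /eqP ->.
  case: (ltngtP n m.+1) nm => // [nm _|-> _]; last by [].
  rewrite /= (HG m (sq m) (Iso m)).2; first exact: IH.
    exact: Wn_mono Wi.
  exact: Wn_mono Wj.
pose Nb (i : int) := absz i.
have WN : forall i n, (Nb i <= n)%nat -> Wn n i by move=> i n; exact: Wn_abs.
exists (fun i j => sq (Nb i + Nb j)%nat i j); split.
- move=> i j _ _; have [L _ _ _] := Iso (Nb i + Nb j)%nat.
  by apply: L; apply: WN; [exact: leq_addr | exact: leq_addl].
- move=> i j _ _; have [_ Bj _ _] := Iso (Nb i + Nb j)%nat.
  by apply: Bj; apply: WN; [exact: leq_addr | exact: leq_addl].
- move=> i j l _ _ _ x y.
  set M := (Nb i + Nb j + Nb l)%nat.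
  have hi : Wn M i by apply: WN; rewrite /M -addnA leq_addr.
  have hj : Wn M j by apply: WN; rewrite /M addnAC leq_addl.
  have hl : Wn M l by apply: WN; rewrite /M leq_addl.
  have [_ _ Mu _] := Iso M.
  have e1 : sq M i l = sq (Nb i + Nb l)%nat i l.
    apply: Ag; first by rewrite /M addnAC leq_addr.
      by apply: WN; rewrite leq_addr.
    by apply: WN; rewrite leq_addl.
  have e2 : sq M i j = sq (Nb i + Nb j)%nat i j.
    apply: Ag; first by rewrite /M leq_addr.
      by apply: WN; rewrite leq_addr.
    by apply: WN; rewrite leq_addl.
  have e3 : sq M j l = sq (Nb j + Nb l)%nat j l.
    apply: Ag; first by rewrite /M -addnA leq_addl.
      by apply: WN; rewrite leq_addr.
    by apply: WN; rewrite leq_addl.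
  by rewrite -e1 -e2 -e3 Mu.
- move=> i _; have [_ _ _ U] := Iso (Nb i + Nb i)%nat.
  by apply: U; apply: WN; exact: leq_addr.
Qed.
End Final.

Theorem corollary5p2p3 (k : fieldType) (A A' : zalg k) :
  cubic_regular A -> cubic_regular A' -> trunc03_iso A A' -> zalg_iso A A'.
Proof.
move=> [HconA _ [resA [HresA HgorA]]] [HconB _ [resB [HresB HgorB]]] [phi0 H0].
have I0 : @isoW k A A' (Wn 0) phi0.
  apply: (@isoW_ext k A A' (fun i : int => (0 <= i) && (i <= 3)) (Wn 0) phi0 _ H0).
  by move=> j; rewrite /Wn /Wd; apply/idP/idP => /andP [h1 h2]; apply/andP; split; ilia.
have [psi Hpsi] := global_iso HconA HresA HgorA HconB HresB HgorB I0.
by exists psi.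
Qed.
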